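(* Let $\mathcal{H}_A\cong\mathbb{C}^d$ and $\mathcal{H}_B$ be finite-dimensional, let $\Phi_1,\Phi_2:\mathcal{L}(\mathcal{H}_A)\to\mathcal{L}(\mathcal{H}_B)$ be quantum channels, $\Delta_\Phi=\Phi_1-\Phi_2$, and let $r=\operatorname{rank}M(\Delta_\Phi)$. Then $$\|\Delta_\Phi\|_{\mathrm{ME}}\le \frac{r}{d}\,\|\Delta_\Phi\|_\diamond .$$
   Context: For a linear map $\mathcal{S}:\mathcal{L}(\mathcal{H}_A)\to\mathcal{L}(\mathcal{H}_B)$ with $\{\ket{i}\}$ an orthonormal basis of $\mathcal{H}_A$: the Choi operator is $J(\mathcal{S})=\sum_{i,j}\mathcal{S}(\ket{i}\!\bra{j})\otimes\ket{i}\!\bra{j}\in\mathcal{L}(\mathcal{H}_B\otimes\mathcal{H}_A)$; the M-operator is $M(\mathcal{S})=\mathrm{Tr}_B[\,|J(\mathcal{S})|\,]$ with $|X|=\sqrt{X^\dagger X}$; the ME-norm is $\|\mathcal{S}\|_{\mathrm{ME}}=\|J(\mathcal{S})/d\|_1$; the diamond norm is $\|\mathcal{S}\|_\diamond=\max_{\rho_{AA'}}\|(\mathcal{S}\otimes\mathrm{id}_{A'})(\rho_{AA'})\|_1$ over finite-dimensional ancillas $\mathcal{H}_{A'}$ and states $\rho_{AA'}$, with $\|X\|_1=\mathrm{Tr}\sqrt{X^\dagger X}$. *)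

(* Defs.v *)
From HB Require Import structures.
From mathcomp Require Import all_boot all_order all_algebra.
From mathcomp Require Import sesquilinear spectral.
From mathcomp Require Import complex mxtens.
From mathcomp Require Import classical_sets reals.
From Stdlib Require Import ClassicalEpsilon.
Set Implicit Arguments. Unset Strict Implicit. Unset Printing Implicit Defensive.
Import Order.TTheory GRing.Theory Num.Theory.
Local Open Scope ring_scope.
Local Open Scope sesquilinear_scope.
Local Open Scope classical_set_scope.

Section Quantum.
Variable R : realType.
Local Notation C := (R[i]).

(* positive semidefinite: <v, A v> >= 0 for all v (in the order of C this
   means the value is real and nonnegative) *)
Definition psdmx n (A : 'M[C]_n) : Prop :=
  forall v : 'cV[C]_n, 0 <= (v ^t* *m A *m v) 0 0.

Definition statemx n (A : 'M[C]_n) : Prop := psdmx A /\ \tr A = 1.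

(* |X| = sqrt(X^dagger X): the (unique) psd square root of X^dagger X *)
Definition mxabs m n (X : 'M[C]_(m, n)) : 'M[C]_n :=
  epsilon (inhabits 0)
    (fun P : 'M[C]_n => psdmx P /\ P *m P = X ^t* *m X).

Definition trnorm n (X : 'M[C]_n) : R := complex.Re (\tr (mxabs X)).

(* block (k,l) of X in L(H_A (x) H_A'), H_A = C^dA, H_A' = C^n *)
Definition blockA dA n (X : 'M[C]_(dA * n)) (k l : 'I_n) : 'M[C]_dA :=
  \matrix_(i, j) X (mxtens_index (i, k)) (mxtens_index (j, l)).

(* (S (x) id_{A'}) X *)
Definition ext_id dA dB (S : 'M[C]_dA -> 'M[C]_dB) n (X : 'M[C]_(dA * n))
  : 'M[C]_(dB * n) :=
  \sum_(k < n) \sum_(l < n) (S (blockA X k l) *t delta_mx k l).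

Definition choi dA dB (S : 'M[C]_dA -> 'M[C]_dB) : 'M[C]_(dB * dA) :=
  \sum_(i < dA) \sum_(j < dA) (S (delta_mx i j) *t delta_mx i j).

Definition ptraceB dB dA (Y : 'M[C]_(dB * dA)) : 'M[C]_dA :=
  \matrix_(i, j) \sum_(b < dB) Y (mxtens_index (b, i)) (mxtens_index (b, j)).

Definition Mop dA dB (S : 'M[C]_dA -> 'M[C]_dB) : 'M[C]_dA :=
  ptraceB (mxabs (choi S)).

Definition me_norm dA dB (S : 'M[C]_dA -> 'M[C]_dB) : R :=
  trnorm ((dA%:R)^-1 *: choi S).

Definition diamond_norm dA dB (S : 'M[C]_dA -> 'M[C]_dB) : R :=
  sup [set t : R | exists (n : nat) (rho : 'M[C]_(dA * n)),
                    statemx rho /\ t = trnorm (ext_id S rho)].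

Definition CPmap dA dB (S : 'M[C]_dA -> 'M[C]_dB) : Prop :=
  forall (n : nat) (X : 'M[C]_(dA * n)), psdmx X -> psdmx (ext_id S X).

Definition TPmap dA dB (S : 'M[C]_dA -> 'M[C]_dB) : Prop :=
  forall X : 'M[C]_dA, \tr (S X) = \tr X.

Definition channel dA dB (S : {linear 'M[C]_dA -> 'M[C]_dB}) : Prop :=
  CPmap S /\ TPmap S.

End Quantum.

(* Main.v *)
Require Import Defs.
From HB Require Import structures.
From mathcomp Require Import all_boot all_order all_algebra.
From mathcomp Require Import sesquilinear spectral.
From mathcomp Require Import complex mxtens.
From mathcomp Require Import classical_sets reals.
From Stdlib Require Import ClassicalEpsilon.
From mathcomp Require Import ring.
Set Implicit Arguments. Unset Strict Implicit. Unset Printing Implicit Defensive.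
Import Order.TTheory GRing.Theory Num.Theory.
Local Open Scope ring_scope.
Section P1.
Local Open Scope sesquilinear_scope.
Variable R : realType.
Local Notation C := (R[i]).

Lemma mxED m n (M N : 'M[C]_(m,n)) i j : (M + N) i j = M i j + N i j.
Proof. by rewrite mxE. Qed.
Lemma mxEN m n (M : 'M[C]_(m,n)) i j : (- M) i j = - M i j.
Proof. by rewrite mxE. Qed.
Lemma mxEB m n (M N : 'M[C]_(m,n)) i j : (M - N) i j = M i j - N i j.
Proof. by rewrite !mxE. Qed.
Lemma mxEZ m n (a : C) (M : 'M[C]_(m,n)) i j : (a *: M) i j = a * M i j.
Proof. by rewrite mxE. Qed.

Lemma adjM m n p (A : 'M[C]_(m,n)) (B : 'M[C]_(n,p)) :
  (A *m B)^t* = B^t* *m A^t*.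
Proof. by rewrite trmx_mul map_mxM. Qed.

Lemma adjD m n (A B : 'M[C]_(m,n)) : (A + B)^t* = A^t* + B^t*.
Proof. by apply/matrixP => i j; rewrite !mxE rmorphD. Qed.

Lemma adjB m n (A B : 'M[C]_(m,n)) : (A - B)^t* = A^t* - B^t*.
Proof. by apply/matrixP => i j; rewrite !mxE rmorphB. Qed.

Lemma adjZ m n (c : C) (A : 'M[C]_(m,n)) : (c *: A)^t* = c^* *: A^t*.
Proof. by apply/matrixP => i j; rewrite !mxE rmorphM. Qed.

Lemma adjE m n (A : 'M[C]_(m,n)) i j : A^t* i j = (A j i)^*.
Proof. by rewrite !mxE. Qed.

Lemma adj1 n : (1%:M : 'M[C]_n)^t* = 1%:M.
Proof. by rewrite trmx1 map_mx1. Qed.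

Lemma vnorm2E n (w : 'cV[C]_n) : (w^t* *m w) 0 0 = \sum_k `|w k 0| ^+ 2.
Proof. by rewrite mxE; apply: eq_bigr => k _; rewrite !mxE normCK mulrC. Qed.

Lemma vnorm2_ge0 n (w : 'cV[C]_n) : 0 <= (w^t* *m w) 0 0.
Proof. by rewrite vnorm2E; apply: sumr_ge0 => k _; rewrite exprn_ge0. Qed.

Lemma vnorm2_eq0 n (w : 'cV[C]_n) : (w^t* *m w) 0 0 = 0 -> w = 0.
Proof.
rewrite vnorm2E => /eqP; rewrite psumr_eq0; last by move=> k _; rewrite exprn_ge0.
move=> /allP H; apply/matrixP => i j; rewrite ord1 mxE.
have := H i (mem_index_enum _); rewrite /= sqrf_eq0 normr_eq0 => /eqP //.
Qed.

Lemma psd_adjmul m n (X : 'M[C]_(m,n)) : psdmx (X^t* *m X).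
Proof.
move=> v; rewrite !mulmxA -[v^t* *m X^t*]adjM -mulmxA.
exact: vnorm2_ge0.
Qed.

End P1.
Section P2.
Local Open Scope sesquilinear_scope.
Variable R : realType.
Local Notation C := (R[i]).

Definition qf n (A : 'M[C]_n) (v : 'cV[C]_n) := (v^t* *m A *m v) 0 0.

Lemma qf_adj n (A : 'M[C]_n) v : (qf A v)^* = qf (A^t*) v.
Proof.
rewrite /qf; have -> : v^t* *m A^t* *m v = (v^t* *m A *m v)^t*.
  by rewrite !adjM trmxCK mulmxA.
by rewrite /qf !mxE.
Qed.

Lemma e_adj n (i : 'I_n) : (delta_mx i 0 : 'cV[C]_n)^t* = delta_mx 0 i.
Proof.
apply/matrixP => a b; rewrite !mxE.
by case: (_ == _); case: (_ == _); rewrite /= ?conjC1 ?conjC0.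
Qed.

Lemma qf_polar n (B : 'M[C]_n) :
  (forall v, qf B v = 0) -> B = 0.
Proof.
move=> H.
have key : forall (u w : 'cV[C]_n) (c : C),
    c * (u^t* *m B *m w) 0 0 + c^* * (w^t* *m B *m u) 0 0 = 0.
  move=> u w c; have := H (u + c *: w); rewrite /qf adjD adjZ.
  rewrite !mulmxDl !mulmxDr.
  rewrite -!scalemxAl -!scalemxAr.
  have hE : forall (M N : 'M[C]_1), (M + N) 0 0 = M 0 0 + N 0 0 by move=> *; rewrite mxE.
  have hZ : forall (a : C) (M : 'M[C]_1), (a *: M) 0 0 = a * M 0 0 by move=> *; rewrite mxE.
  rewrite !hE !hZ.
  have := H u; have := H w; rewrite /qf => -> ->.
  by rewrite !mulr0 add0r addr0.
apply/matrixP => i j; rewrite mxE.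
have E : forall i j, (delta_mx i 0 : 'cV[C]_n)^t* *m B *m delta_mx j 0 = (delta_mx 0 i *m B) *m delta_mx j 0.
  by move=> *; rewrite e_adj.
have h1 := key (delta_mx i 0) (delta_mx j 0) 1.
have h2 := key (delta_mx i 0) (delta_mx j 0) 'i.
rewrite !E -!rowE -!colE !mxE conjC1 !mul1r in h1.
rewrite !E -!rowE -!colE !mxE conjCi in h2.
rewrite mulNr -mulrBr in h2.
have h3 : B i j - B j i = 0.
  by apply: (mulfI (neq0Ci C)); rewrite h2 mulr0.
move/eqP: h1; rewrite addrC addr_eq0 => /eqP h1.
move: h3; rewrite h1 opprK => /eqP; rewrite -mulr2n mulrn_eq0 /= => /eqP //.
Qed.

Lemma psd_herm n (A : 'M[C]_n) : psdmx A -> A^t* = A.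
Proof.
move=> HA; apply/eqP; rewrite -subr_eq0; apply/eqP/qf_polar => v.
have -> : qf (A^t* - A) v = qf (A^t*) v - qf A v.
  by rewrite /qf mulmxBr mulmxBl mxEB.
by rewrite -qf_adj geC0_conj ?subrr //; exact: HA.
Qed.
End P2.
Section P3.
Local Open Scope sesquilinear_scope.
Variable R : realType.
Local Notation C := (R[i]).

Definition unit_decomp n (A : 'M[C]_n) (U : 'M[C]_n) (D : 'rV[C]_n) :=
  [/\ U *m U^t* = 1%:M, U^t* *m U = 1%:M & A = U^t* *m diag_mx D *m U].

Lemma herm_spectral n (A : 'M[C]_n) : A^t* = A ->
  exists U D, unit_decomp A U D.
Proof.
move=> HA.
have Hn : A \is normalmx by apply/normalmxP; rewrite HA.
move/orthomx_spectralP: Hn => E.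
set P := spectralmx A in E; set D := spectral_diag A in E.
have Pu : P \is unitarymx by exact: spectral_unitarymx.
exists P, D; split.
- exact/unitarymxP.
- by rewrite -invmx_unitary // mulVmx // unitarymx_unit.
- by rewrite E invmx_unitary.
Qed.

Lemma decomp_diag n (A U : 'M[C]_n) D : unit_decomp A U D ->
  forall i, D 0 i = qf A (U^t* *m delta_mx i 0).
Proof.
move=> [H1 H2 ->] i.
have HH : forall m (X : 'M[C]_(m, n)), X *m U *m U^t* = X.
  by move=> m X; rewrite -mulmxA H1 mulmx1.
rewrite /qf adjM trmxCK e_adj !mulmxA !HH -rowE -colE !mxE eqxx /=.
by rewrite mulr1n.
Qed.

Lemma qf_conj_diag n (U : 'M[C]_n) (D : 'rV[C]_n) v :
  qf (U^t* *m diag_mx D *m U) v =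
  \sum_k D 0 k * `|(U *m v) k 0| ^+ 2.
Proof.
rewrite /qf !mulmxA -adjM -mulmxA mxE.
apply: eq_bigr => k _.
rewrite mul_mx_diag !mxE normCK.
by rewrite mulrC mulrA [_ * D 0 k]mulrC.
Qed.

Lemma psd_conj_diag n (U : 'M[C]_n) (D : 'rV[C]_n) :
  (forall k, 0 <= D 0 k) -> psdmx (U^t* *m diag_mx D *m U).
Proof.
move=> HD v; rewrite -/(qf _ v) qf_conj_diag.
by apply: sumr_ge0 => k _; rewrite mulr_ge0 ?exprn_ge0.
Qed.

Lemma psd_decomp_ge0 n (A U : 'M[C]_n) D : psdmx A -> unit_decomp A U D ->
  forall k, 0 <= D 0 k.
Proof. by move=> HA HU k; rewrite (decomp_diag HU); apply: HA. Qed.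

Lemma conj_diag_mul n (U : 'M[C]_n) (D E : 'rV[C]_n) : U *m U^t* = 1%:M ->
  (U^t* *m diag_mx D *m U) *m (U^t* *m diag_mx E *m U) =
  U^t* *m diag_mx (\row_j (D 0 j * E 0 j)) *m U.
Proof.
move=> H.
by rewrite -!mulmxA [U *m (U^t* *m _)]mulmxA H mul1mx [diag_mx D *m (diag_mx E *m U)]mulmxA mulmx_diag !mulmxA.
Qed.

Lemma psd_sqrt n (A : 'M[C]_n) : psdmx A ->
  exists S, psdmx S /\ S *m S = A.
Proof.
move=> HA; have [U [D HU]] := herm_spectral (psd_herm HA).
have HD := psd_decomp_ge0 HA HU.
exists (U^t* *m diag_mx (\row_j sqrtC (D 0 j)) *m U); split.
  by apply: psd_conj_diag => k; rewrite mxE sqrtC_ge0.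
case: HU => H1 H2 E.
rewrite conj_diag_mul // E; congr (_ *m _ *m _); congr diag_mx.
by apply/rowP => j; rewrite !mxE -expr2 sqrtCK.
Qed.

Lemma psd_qf0 n (A : 'M[C]_n) v : psdmx A -> qf A v = 0 -> A *m v = 0.
Proof.
move=> HA; have [S [HS E]] := psd_sqrt HA.
rewrite /qf -E -{1}(psd_herm HS) !mulmxA -adjM -mulmxA => H0; have h := vnorm2_eq0 H0.
by rewrite -mulmxA h mulmx0.
Qed.

End P3.
Section P4.
Local Open Scope sesquilinear_scope.
Variable R : realType.
Local Notation C := (R[i]).

Lemma diag_e n (D : 'rV[C]_n) i : diag_mx D *m (delta_mx i 0 : 'cV[C]_n) = D 0 i *: delta_mx i 0.
Proof.
apply/matrixP => a b; rewrite mul_diag_mx !mxE.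
have [->|ne] := eqVneq a i; first by [].
by rewrite /= mulr0n !mulr0.
Qed.

Lemma decomp_eig n (A U : 'M[C]_n) D : unit_decomp A U D ->
  forall i, A *m (U^t* *m (delta_mx i 0 : 'cV[C]_n)) = D 0 i *: (U^t* *m (delta_mx i 0 : 'cV[C]_n)).
Proof.
move=> [H1 H2 ->] i.
by rewrite -!mulmxA [U *m (U^t* *m _)]mulmxA H1 mul1mx diag_e scalemxAr.
Qed.

Lemma decomp_unitvec n (U : 'M[C]_n) i : U *m U^t* = 1%:M ->
  ((U^t* *m (delta_mx i 0 : 'cV[C]_n))^t* *m (U^t* *m (delta_mx i 0 : 'cV[C]_n))) 0 0 = 1.
Proof.
move=> H1; rewrite adjM trmxCK e_adj mulmxA -[_ *m U *m U^t*]mulmxA H1 mulmx1.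
by rewrite -rowE !mxE eqxx.
Qed.

Lemma psd_sqrt_unique n (P Q : 'M[C]_n) : psdmx P -> psdmx Q ->
  P *m P = Q *m Q -> P = Q.
Proof.
move=> HP HQ E.
set H := P - Q.
have HH : H^t* = H by rewrite /H adjB !psd_herm.
have [U [D HU]] := herm_spectral HH.
suff D0 : D = 0.
  apply/eqP; rewrite -subr_eq0 -/H; apply/eqP.
  case: HU => _ _ ->; rewrite D0.
  have -> : diag_mx (0 : 'rV[C]_n) = 0 by apply/matrixP => a b; rewrite !mxE mul0rn.
  by rewrite mulmx0 mul0mx.
apply/rowP => i; rewrite mxE.
set v := U^t* *m (delta_mx i 0 : 'cV[C]_n).
set mu := D 0 i.
have Hv : H *m v = mu *: v := decomp_eig HU i.
have mureal : mu^* = mu.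
  by rewrite /mu (decomp_diag HU) qf_adj HH.
have Hv' : v^t* *m H = mu *: v^t*.
  by rewrite -HH -adjM Hv adjZ mureal.
have key : mu * (qf P v + qf Q v) = 0.
  have : v^t* *m (P *m P - Q *m Q) *m v = 0 by rewrite E subrr mulmx0 mul0mx.
  have -> : P *m P - Q *m Q = P *m H + H *m Q.
    by rewrite /H mulmxBr mulmxBl addrA subrK.
  rewrite mulmxDr mulmxDl => /(congr1 (fun M : 'M[C]_1 => M 0 0)).
  move=> h.
  have {h} : (v^t* *m (P *m H) *m v) 0 0 + (v^t* *m (H *m Q) *m v) 0 0 = 0.
    by rewrite -mxED h mxE.
  rewrite -!mulmxA Hv [v^t* *m (H *m _)]mulmxA Hv' -!scalemxAr -scalemxAl !mxEZ.
  by rewrite /qf !mulmxA -mulrDr.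
have vv : (v^t* *m v) 0 0 = 1 by case: HU => H1 _ _; exact: decomp_unitvec.
case: (eqVneq mu 0) => // mu0.
move/eqP: key; rewrite mulf_eq0 (negPf mu0) /= paddr_eq0 ?HP ?HQ //.
case/andP => /eqP a0 /eqP b0.
have : H *m v = 0 by rewrite /H mulmxBl (psd_qf0 HP a0) (psd_qf0 HQ b0) subrr.
rewrite Hv => /(congr1 (fun M => v^t* *m M)).
rewrite mulmx0 -scalemxAr => /(congr1 (fun M : 'M[C]_1 => M 0 0)).
by rewrite mxEZ vv mulr1 mxE.
Qed.

Lemma mxabs_spec m n (X : 'M[C]_(m, n)) :
  psdmx (mxabs X) /\ mxabs X *m mxabs X = X^t* *m X.
Proof.
rewrite /mxabs.
have := psd_sqrt (psd_adjmul X).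
exact: epsilon_spec.
Qed.

Lemma mxabs_eq m n (X : 'M[C]_(m, n)) P : psdmx P -> P *m P = X^t* *m X ->
  mxabs X = P.
Proof.
move=> HP E; have [H1 H2] := mxabs_spec X.
by apply: psd_sqrt_unique => //; rewrite H2 E.
Qed.

End P4.
Section P5.
Local Open Scope sesquilinear_scope.
Variable R : realType.
Local Notation C := (R[i]).

Lemma adj_diag n (D : 'rV[C]_n) : (diag_mx D)^t* = diag_mx (\row_j (D 0 j)^*).
Proof. by rewrite tr_diag_mx map_diag_mx; congr diag_mx; apply/rowP => j; rewrite !mxE. Qed.

Lemma mxabs_decomp n (X U : 'M[C]_n) D : unit_decomp X U D ->
  mxabs X = U^t* *m diag_mx (\row_j `|D 0 j|) *m U.
Proof.
move=> HU; case: (HU) => H1 H2 E.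
apply: mxabs_eq.
  by apply: psd_conj_diag => k; rewrite mxE normr_ge0.
rewrite conj_diag_mul // {1}E !adjM trmxCK adj_diag -!mulmxA.
rewrite E -!mulmxA [U *m (U^t* *m _)]mulmxA H1 mul1mx [diag_mx _ *m (diag_mx _ *m _)]mulmxA mulmx_diag !mulmxA.
congr (_ *m diag_mx _ *m _); apply/rowP => j; rewrite !mxE.
by rewrite -expr2 normCK mulrC.
Qed.

Lemma tr_conj_diag n (U : 'M[C]_n) D : U *m U^t* = 1%:M ->
  \tr (U^t* *m diag_mx D *m U) = \sum_j D 0 j.
Proof. by move=> H; rewrite mxtrace_mulC mulmxA H mul1mx mxtrace_diag. Qed.

Lemma qf_e n (P : 'M[C]_n) i : qf P (delta_mx i 0) = P i i.
Proof. by rewrite /qf e_adj -rowE -colE !mxE. Qed.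

Lemma tr_psd_ge0 n (P : 'M[C]_n) : psdmx P -> 0 <= \tr P.
Proof.
move=> HP; rewrite /mxtrace; apply: sumr_ge0 => i _.
by rewrite -qf_e; apply: HP.
Qed.

Lemma psd_scale n (a : C) (P : 'M[C]_n) : 0 <= a -> psdmx P -> psdmx (a *: P).
Proof.
move=> ha HP v; rewrite -scalemxAr -scalemxAl mxEZ.
by apply: mulr_ge0 => //; apply: HP.
Qed.

Lemma ReM_real (a : R) (t : C) : complex.Re ((a%:C)%C * t) = a * complex.Re t.
Proof. by case: t => x y /=; rewrite mul0r subr0. Qed.

Lemma mxabs_scale m n (a : R) (X : 'M[C]_(m, n)) : 0 <= a ->
  mxabs ((a%:C)%C *: X) = (a%:C)%C *: mxabs X.
Proof.
move=> ha; have [H1 H2] := mxabs_spec X.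
have ha' : 0 <= (a%:C)%C by rewrite ler0c.
apply: mxabs_eq; first exact: psd_scale.
rewrite -scalemxAl -scalemxAr H2 adjZ -scalemxAl -scalemxAr scalerA scalerA.
by rewrite geC0_conj.
Qed.

Lemma trnorm_scale n (a : R) (X : 'M[C]_n) : 0 <= a ->
  trnorm ((a%:C)%C *: X) = a * trnorm X.
Proof. by move=> ha; rewrite /trnorm mxabs_scale // mxtraceZ ReM_real. Qed.

End P5.
Section P6.
Local Open Scope sesquilinear_scope.
Variable R : realType.
Local Notation C := (R[i]).

Lemma e_entry n (X : 'M[C]_n) i j :
  ((delta_mx 0 i : 'rV[C]_n) *m X *m (delta_mx j 0 : 'cV[C]_n)) 0 0 = X i j.
Proof. by rewrite -rowE -colE !mxE. Qed.

Lemma qf_conjU n (A U : 'M[C]_n) j :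
  qf A (U^t* *m (delta_mx j 0 : 'cV[C]_n)) = (U *m A *m U^t*) j j.
Proof.
by rewrite /qf adjM trmxCK e_adj -[in RHS]e_entry !mulmxA.
Qed.

Lemma tr_conjU n (A U : 'M[C]_n) : U^t* *m U = 1%:M ->
  \tr (U *m A *m U^t*) = \tr A.
Proof. by move=> H; rewrite mxtrace_mulC mulmxA H mul1mx. Qed.

Lemma Re_le_of_le (t : C) (a : R) : t <= (a%:C)%C -> complex.Re t <= a.
Proof. by rewrite lecE => /andP[_ ]. Qed.

Lemma trnorm_diff_le n (A B : 'M[C]_n) : psdmx A -> psdmx B ->
  \tr A = 1 -> \tr B = 1 -> trnorm (A - B) <= 2.
Proof.
move=> HA HB tA tB.
have HY : (A - B)^t* = A - B by rewrite adjB !psd_herm.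
have [U [D HU]] := herm_spectral HY.
rewrite /trnorm (mxabs_decomp HU).
case: (HU) => H1 H2 E.
rewrite tr_conj_diag //.
apply: Re_le_of_le.
have -> : ((2 : R)%:C)%C = \tr (U *m A *m U^t*) + \tr (U *m B *m U^t*).
  by rewrite !tr_conjU // tA tB rmorph_nat.
rewrite /mxtrace -big_split /=; apply: ler_sum => j _.
rewrite mxE (decomp_diag HU j).
have -> : qf (A - B) (U^t* *m delta_mx j 0) =
   qf A (U^t* *m delta_mx j 0) - qf B (U^t* *m delta_mx j 0).
  by rewrite /qf mulmxBr mulmxBl mxEB.
rewrite -!qf_conjU.
apply: le_trans (ler_normB _ _) _.
by rewrite !ger0_norm ?HA ?HB.
Qed.

End P6.
Section P7.
Local Open Scope sesquilinear_scope.
Variable R : realType.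
Local Notation C := (R[i]).

Lemma sum_tens m n (F : 'I_(m * n) -> C) :
  \sum_x F x = \sum_i \sum_j F (mxtens_index (i, j)).
Proof.
rewrite pair_big /=.
rewrite (reindex (fun p : 'I_m * 'I_n => mxtens_index p)) /=.
  by apply: eq_bigr => [[i j]] _.
by exists (@mxtens_unindex m n) => x _; rewrite (mxtens_indexK, mxtens_unindexK).
Qed.

Lemma sum_delta n (F : 'I_n -> C) i : \sum_i' F i' * (i == i')%:R = F i.
Proof.
rewrite (bigD1 i) //= eqxx mulr1 big1 ?addr0 // => i' ne.
by rewrite eq_sym (negPf ne) mulr0.
Qed.

Lemma sum_delta2 m n (F : 'I_m -> 'I_n -> C) i j :
  \sum_k \sum_l F k l * ((i == k) && (j == l))%:R = F i j.
Proof.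
rewrite (bigD1 i) //= [X in _ + X]big1 ?addr0.
  by rewrite -[RHS](sum_delta (F i) j); apply: eq_bigr => l _; rewrite eqxx.
move=> k ne; apply: big1 => l _.
by rewrite eq_sym (negPf ne) mulr0.
Qed.

Lemma choiE dA dB (S : 'M[C]_dA -> 'M[C]_dB) b i b' j :
  choi S (mxtens_index (b, i)) (mxtens_index (b', j)) = S (delta_mx i j) b b'.
Proof.
rewrite /choi summxE.
under eq_bigr => k _ do rewrite summxE.
under eq_bigr => k _ do under eq_bigr => l _ do rewrite tensmxE mxE.
exact: (sum_delta2 (fun k l => S (delta_mx k l) b b')).
Qed.

Lemma ext_idE dA dB (S : 'M[C]_dA -> 'M[C]_dB) n (X : 'M[C]_(dA * n)) b k b' l :
  ext_id S X (mxtens_index (b, k)) (mxtens_index (b', l)) = S (blockA X k l) b b'.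
Proof.
rewrite /ext_id summxE.
under eq_bigr => k' _ do rewrite summxE.
under eq_bigr => k' _ do under eq_bigr => l' _ do rewrite tensmxE mxE.
exact: (sum_delta2 (fun k l => S (blockA X k l) b b')).
Qed.

Lemma tens_eq m n (X Y : 'M[C]_(m * n)) :
  (forall a i b j, X (mxtens_index (a, i)) (mxtens_index (b, j)) =
                   Y (mxtens_index (a, i)) (mxtens_index (b, j))) -> X = Y.
Proof.
move=> H; apply/matrixP => x y.
by case: (mxtens_indexP x) => a i; case: (mxtens_indexP y) => b j; apply: H.
Qed.

End P7.
Section P8.
Local Open Scope sesquilinear_scope.
Variable R : realType.
Local Notation C := (R[i]).

Definition zvec d (Q : 'M[C]_d) : 'cV[C]_(d * d) :=
  \matrix_(x, y) Q (mxtens_unindex x).2 (mxtens_unindex x).1.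

Definition rhoQ d (Q : 'M[C]_d) := zvec Q *m (zvec Q)^t*.

Lemma rhoQE d (Q : 'M[C]_d) i k j l :
  rhoQ Q (mxtens_index (i, k)) (mxtens_index (j, l)) = Q k i * (Q l j)^*.
Proof. by rewrite /rhoQ mxE big_ord1 !mxE !mxtens_indexK. Qed.

Lemma rhoQ_psd d (Q : 'M[C]_d) : psdmx (rhoQ Q).
Proof. by rewrite /rhoQ -{1}(trmxCK (zvec Q)); apply: psd_adjmul. Qed.

Lemma blockA_rhoQ d (Q : 'M[C]_d) k l :
  blockA (rhoQ Q) k l = \sum_i \sum_j (Q k i * (Q l j)^*) *: delta_mx i j.
Proof.
rewrite {1}[blockA _ k l]matrix_sum_delta.
by apply: eq_bigr => i _; apply: eq_bigr => j _; rewrite mxE rhoQE.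
Qed.

Lemma ext_rho d dB (S : {linear 'M[C]_d -> 'M[C]_dB}) (Q : 'M[C]_d) b k b' l :
  ext_id S (rhoQ Q) (mxtens_index (b, k)) (mxtens_index (b', l)) =
  \sum_i \sum_j Q k i * (Q l j)^* * choi S (mxtens_index (b, i)) (mxtens_index (b', j)).
Proof.
rewrite ext_idE blockA_rhoQ linear_sum summxE; apply: eq_bigr => i _.
rewrite linear_sum summxE; apply: eq_bigr => j _.
by rewrite linearZ mxEZ choiE.
Qed.

Lemma tr_tens m n (X : 'M[C]_(m * n)) :
  \tr X = \sum_i \sum_k X (mxtens_index (i, k)) (mxtens_index (i, k)).
Proof. by rewrite /mxtrace sum_tens. Qed.

Lemma tr_ext dA dB (S : 'M[C]_dA -> 'M[C]_dB) n (X : 'M[C]_(dA * n)) :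
  (forall Y, \tr (S Y) = \tr Y) -> \tr (ext_id S X) = \tr X.
Proof.
move=> TP; rewrite !tr_tens.
under eq_bigr => b _ do under eq_bigr => k _ do rewrite ext_idE.
rewrite exchange_big [RHS]exchange_big /=; apply: eq_bigr => k _.
have := TP (blockA X k k); rewrite /mxtrace => ->.
by apply: eq_bigr => i _; rewrite mxE.
Qed.

Lemma tr_rhoQ d (Q : 'M[C]_d) : Q^t* = Q -> Q *m Q = Q -> \tr (rhoQ Q) = \tr Q.
Proof.
move=> H1 H2; have -> : \tr Q = \tr (Q *m Q) by rewrite H2.
rewrite tr_tens exchange_big /=.
apply: eq_bigr => k _; rewrite mxE; apply: eq_bigr => i _.
by rewrite rhoQE; congr (_ * _); rewrite -{2}H1 !mxE.
Qed.

End P8.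
Section P9.
Local Open Scope sesquilinear_scope.
Variable R : realType.
Local Notation C := (R[i]).

Lemma rank_diag n (q : 'rV[C]_n) : \rank (diag_mx q) = \sum_i nat_of_bool (q 0 i != 0).
Proof.
elim: n q => [|n IH] q.
  by rewrite big_ord0; apply/eqP; rewrite mxrank_eq0; apply/eqP/matrixP => [[]].
set l := lsubmx (q : 'rV_(1 + n)); set r := rsubmx (q : 'rV_(1 + n)).
transitivity (\rank (block_mx (diag_mx l) 0 0 (diag_mx r))).
  by rewrite -diag_mx_row hsubmxK.
rewrite rank_diag_block_mx IH big_ord_recl.
have E2 : \sum_i nat_of_bool (r 0 i != 0) = \sum_(i < n) nat_of_bool (q 0 (lift ord0 i) != 0).
  apply: eq_bigr => i _; rewrite /r mxE; congr (nat_of_bool (q _ _ != 0)).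
  exact: val_inj.
have El : l 0 0 = q 0 ord0 by rewrite /l mxE; congr (q _ _); exact: val_inj.
have E1 : \rank (diag_mx l) = nat_of_bool (q 0 ord0 != 0).
  rewrite -El; have [a0|a0] := eqVneq (l 0 0) 0.
    have -> : diag_mx l = 0.
      have a0' : l ord0 ord0 = 0 := a0.
      apply/matrixP => i j; rewrite !ord1 !mxE eqxx mulr1n.
      by move: a0; rewrite /l mxE.
    by rewrite mxrank0.
  apply/eqP; rewrite eqn_leq rank_leq_row lt0n mxrank_eq0 /=.
  apply/eqP => /matrixP /(_ 0 0); rewrite !mxE eqxx mulr1n => /eqP.
  by move: a0; rewrite /l mxE => /negPf ->.
by rewrite E1 E2.
Qed.

End P9.
Section P10.
Local Open Scope sesquilinear_scope.
Variable R : realType.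
Local Notation C := (R[i]).

Lemma rank_decomp n (M U : 'M[C]_n) D : unit_decomp M U D ->
  \rank M = \rank (diag_mx D).
Proof.
move=> [H1 H2 ->].
have Uu : U \in unitmx by apply/unitarymx_unit/unitarymxP.
have Uu' : U^t* \in unitmx.
  by apply/unitarymx_unit; rewrite trmxC_unitary; apply/unitarymxP.
rewrite mxrankMfree ?row_free_unit //.
by rewrite eqmxMfull ?row_full_unit.
Qed.

Lemma support_proj n (M : 'M[C]_n) : psdmx M ->
  exists Q : 'M[C]_n, [/\ Q^t* = Q, Q *m Q = Q, \tr Q = (\rank M)%:R
                       & M *m Q = M].
Proof.
move=> HM; have [U [D HU]] := herm_spectral (psd_herm HM).
set q : 'rV[C]_n := \row_j (nat_of_bool (D 0 j != 0))%:R.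
have qE : forall j, q 0 j = (nat_of_bool (D 0 j != 0))%:R by move=> j; rewrite mxE.
clearbody q.
have q01 : forall j, q 0 j * q 0 j = q 0 j.
  by move=> j; rewrite qE; case: (D 0 j != 0); rewrite /= ?mulr1 ?mulr0.
case: (HU) => H1 H2 E.
exists (U^t* *m diag_mx q *m U); split.
- rewrite !adjM trmxCK adj_diag mulmxA; congr (_ *m diag_mx _ *m _).
  by apply/rowP => j; rewrite !mxE qE conjC_nat.
- rewrite (conj_diag_mul q q H1).
  have -> : \row_j (q 0 j * q 0 j) = q by apply/rowP => j; rewrite [LHS]mxE q01.
  by [].
- rewrite tr_conj_diag // (rank_decomp HU) rank_diag natr_sum.
  by apply: eq_bigr => j _; rewrite qE.
- rewrite [in LHS]E (conj_diag_mul D q H1).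
  have -> : \row_j (D 0 j * q 0 j) = D.
    apply/rowP => j; rewrite [LHS]mxE qE.
    by case: eqVneq => [->|] /=; rewrite ?mul0r ?mulr1.
  by rewrite -E.
Qed.

End P10.
Section P11.
Local Open Scope sesquilinear_scope.
Variable R : realType.
Local Notation C := (R[i]).

Lemma qf_expand n (A : 'M[C]_n) v :
  qf A v = \sum_x \sum_y (v x 0)^* * A x y * v y 0.
Proof.
rewrite /qf mxE; under eq_bigr => y _ do rewrite mxE mulr_suml.
rewrite exchange_big /=; apply: eq_bigr => x _; apply: eq_bigr => y _.
by rewrite !mxE.
Qed.

Definition tv dB d (b : 'I_dB) (u : 'cV[C]_d) : 'cV[C]_(dB * d) :=
  \matrix_(x, y) (((mxtens_unindex x).1 == b)%:R * u (mxtens_unindex x).2 0).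

Lemma tvE dB d (b : 'I_dB) (u : 'cV[C]_d) b1 i :
  tv b u (mxtens_index (b1, i)) 0 = (b1 == b)%:R * u i 0.
Proof. by rewrite mxE mxtens_indexK. Qed.

Lemma sum_ind_l m (F : 'I_m -> C) b : \sum_b1 (b1 == b)%:R * F b1 = F b.
Proof.
rewrite (bigD1 b) //= eqxx mul1r big1 ?addr0 // => b1 ne.
by rewrite (negPf ne) mul0r.
Qed.

Lemma ptrace_qf dB d (P : 'M[C]_(dB * d)) u :
  qf (ptraceB P) u = \sum_b qf P (tv b u).
Proof.
rewrite qf_expand.
under eq_bigr => i _ do under eq_bigr => j _ do rewrite mxE mulr_sumr mulr_suml.
under [RHS]eq_bigr => b _ do rewrite qf_expand sum_tens.
have sw : forall (a b c w v : C), a * c * w * (b * v) = a * (b * (c * w * v)).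
  by move=> *; ring.
under [RHS]eq_bigr => b _ do under eq_bigr => b1 _ do under eq_bigr => i _ do
  rewrite sum_tens.
under [RHS]eq_bigr => b _ do under eq_bigr => b1 _ do under eq_bigr => i _ do
  under eq_bigr => b2 _ do under eq_bigr => j _ do
  rewrite tvE tvE rmorphM rmorph_nat sw.
under [RHS]eq_bigr => b _ do under eq_bigr => b1 _ do under eq_bigr => i _ do
  under eq_bigr => b2 _ do rewrite -mulr_sumr.
under [RHS]eq_bigr => b _ do under eq_bigr => b1 _ do under eq_bigr => i _ do
  under eq_bigr => b2 _ do rewrite -mulr_sumr.
under [RHS]eq_bigr => b _ do under eq_bigr => b1 _ do under eq_bigr => i _ do
  rewrite -mulr_sumr.
under [RHS]eq_bigr => b _ do under eq_bigr => b1 _ do rewrite -mulr_sumr.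
under [RHS]eq_bigr => b _ do rewrite sum_ind_l.
under [RHS]eq_bigr => b _ do under eq_bigr => i _ do rewrite sum_ind_l.
rewrite [RHS]exchange_big /=; apply: eq_bigr => i _.
rewrite exchange_big /=; apply: eq_bigr => j _; apply: eq_bigr => b _.
by [].
Qed.

End P11.
Section P12.
Local Open Scope sesquilinear_scope.
Variable R : realType.
Local Notation C := (R[i]).

Lemma Jtv_entry dB d (J : 'M[C]_(dB * d)) b (u : 'cV[C]_d) x :
  (J *m tv b u) x 0 = \sum_j J x (mxtens_index (b, j)) * u j 0.
Proof.
rewrite mxE sum_tens.
under eq_bigr => b2 _ do under eq_bigr => j _ do rewrite tvE mulrCA.
under eq_bigr => b2 _ do rewrite -mulr_sumr.
by rewrite sum_ind_l.
Qed.

Lemma support_right dB d (J : 'M[C]_(dB * d)) (Q : 'M[C]_d) :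
  ptraceB (mxabs J) *m Q = ptraceB (mxabs J) ->
  forall x b l, \sum_j J x (mxtens_index (b, j)) * Q j l = J x (mxtens_index (b, l)).
Proof.
move=> MQ x b l.
have [HP HP2] := mxabs_spec J.
set P := mxabs J in HP HP2 MQ.
set M := ptraceB P in MQ.
set K := 1%:M - Q.
have MK : M *m K = 0 by rewrite /K mulmxBr mulmx1 MQ subrr.
set u := K *m (delta_mx l 0 : 'cV[C]_d).
have qM : qf M u = 0.
  rewrite /qf /u mulmxA -[_ *m M *m K]mulmxA MK mulmx0 mul0mx mxE //.
have Hb : forall b, qf P (tv b u) = 0.
  move: qM; rewrite /M ptrace_qf => /psumr_eq0P H b1.
  by apply: H => // b2 _; apply: HP.
have HJ : J *m tv b u = 0.
  apply: vnorm2_eq0.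
  rewrite adjM -mulmxA [J^t* *m _]mulmxA -HP2.
  by rewrite -[P *m P *m _]mulmxA (psd_qf0 HP (Hb b)) !mulmx0 mxE.
have H0 : (J *m tv b u) x 0 = 0 by rewrite HJ mxE.
rewrite Jtv_entry in H0.
have Eu : forall j, u j 0 = (j == l)%:R - Q j l.
  by move=> j; rewrite /u -colE !mxE.
move: H0; under eq_bigr => j _ do rewrite Eu mulrBr.
rewrite sumrB.
have -> : \sum_j J x (mxtens_index (b, j)) * (j == l)%:R = J x (mxtens_index (b, l)).
  rewrite -[RHS](sum_delta (fun j => J x (mxtens_index (b, j))) l).
  by apply: eq_bigr => j _; rewrite eq_sym.
by move/eqP; rewrite subr_eq0 => /eqP.
Qed.

End P12.
Section P13.
Local Open Scope sesquilinear_scope.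
Variable R : realType.
Local Notation C := (R[i]).

Lemma blockAZ dA n (a : C) (X : 'M[C]_(dA * n)) k l :
  blockA (a *: X) k l = a *: blockA X k l.
Proof. by apply/matrixP => i j; rewrite !mxE. Qed.

Lemma ext_id_sub dA dB (S1 S2 : 'M[C]_dA -> 'M[C]_dB) n (X : 'M[C]_(dA * n)) :
  ext_id (fun Y => S1 Y - S2 Y) X = ext_id S1 X - ext_id S2 X.
Proof. by apply: tens_eq => a i b j; rewrite mxEB !ext_idE mxEB. Qed.

Lemma choi_sub dA dB (S1 S2 : 'M[C]_dA -> 'M[C]_dB) :
  choi (fun Y => S1 Y - S2 Y) = choi S1 - choi S2.
Proof. by apply: tens_eq => a i b j; rewrite mxEB !choiE mxEB. Qed.

Lemma ext_idZ dA dB (S : {linear 'M[C]_dA -> 'M[C]_dB}) n (a : C) (X : 'M[C]_(dA * n)) :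
  ext_id S (a *: X) = a *: ext_id S X.
Proof. by apply: tens_eq => b k b' l; rewrite mxEZ !ext_idE blockAZ linearZ mxEZ. Qed.

Lemma choi_rho1 d dB (S : {linear 'M[C]_d -> 'M[C]_dB}) :
  choi S = ext_id S (rhoQ 1%:M).
Proof.
apply: tens_eq => b k b' l; rewrite ext_rho.
under eq_bigr => i _ do under eq_bigr => j _ do rewrite !mxE conjC_nat.
rewrite (bigD1 k) //= [X in _ + X]big1 ?addr0.
  rewrite (bigD1 l) //= [X in _ + X]big1 ?addr0.
    by rewrite !eqxx mul1r mul1r.
  by move=> j ne; rewrite (eq_sym l) (negPf ne) mulr0 mul0r.
move=> i ne; apply: big1 => j _.
by rewrite eq_sym (negPf ne) !mul0r.
Qed.

Lemma choi_psd d dB (S : {linear 'M[C]_d -> 'M[C]_dB}) :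
  CPmap S -> psdmx (choi S).
Proof. by move=> CP; rewrite choi_rho1; apply: CP; apply: rhoQ_psd. Qed.

End P13.
Section P14.
Local Open Scope sesquilinear_scope.
Variable R : realType.
Local Notation C := (R[i]).

Lemma conjM' (a b : C) : (a * b)^* = a^* * b^*.
Proof. by rewrite rmorphM. Qed.

Lemma conj_sum' n (F : 'I_n -> C) : (\sum_i F i)^* = \sum_i (F i)^*.
Proof. by rewrite rmorph_sum. Qed.

Lemma herm_entry n (A : 'M[C]_n) : A^t* = A -> forall i j, A i j = (A j i)^*.
Proof. by move=> H i j; rewrite -{1}H !mxE. Qed.

Lemma sandwich dB d (J : 'M[C]_(dB * d)) (Q : 'M[C]_d) :
  J^t* = J -> Q^t* = Q -> ptraceB (mxabs J) *m Q = ptraceB (mxabs J) ->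
  forall b k b' l, J (mxtens_index (b, k)) (mxtens_index (b', l)) =
  \sum_i \sum_j Q k i * (Q l j)^* * J (mxtens_index (b, i)) (mxtens_index (b', j)).
Proof.
move=> HJ HQ MQ b k b' l.
have Rt := support_right MQ.
have Jc := herm_entry HJ; have Qc := herm_entry HQ.
have Lt : forall y b k, \sum_i Q k i * J (mxtens_index (b, i)) y = J (mxtens_index (b, k)) y.
  move=> y b1 k1; rewrite [RHS]Jc -(Rt y b1 k1) conj_sum'.
  by apply: eq_bigr => i _; rewrite conjM' -Jc -Qc mulrC.
rewrite -Lt; apply: eq_bigr => i _.
rewrite -Rt mulr_sumr; apply: eq_bigr => j _.
by rewrite -Qc mulrAC mulrA.
Qed.

Lemma psd_tr0 n (Q : 'M[C]_n) : psdmx Q -> \tr Q = 0 -> Q = 0.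
Proof.
move=> HQ t0.
have Hd : forall i, Q i i = 0.
  move=> i; move: t0; rewrite /mxtrace => /psumr_eq0P H.
  by apply: H => // j _; rewrite -qf_e; apply: HQ.
apply/matrixP => i j.
have := psd_qf0 HQ (etrans (qf_e Q j) (Hd j)).
move=> /matrixP /(_ i 0); rewrite -colE !mxE => ->.
by [].
Qed.

End P14.
Section P15.
Local Open Scope sesquilinear_scope.
Variable R : realType.
Local Notation C := (R[i]).

Lemma mxabs0 m n : mxabs (0 : 'M[C]_(m, n)) = 0.
Proof.
apply: mxabs_eq; last by rewrite mulmx0 ?mul0mx mulmx0.
by move=> v; rewrite mulmx0 mul0mx mxE.
Qed.

Lemma trnorm0 n : trnorm (0 : 'M[C]_n) = 0.
Proof. by rewrite /trnorm mxabs0 mxtrace0. Qed.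

Lemma main_lemma (d dB : nat)
  (Phi1 Phi2 : {linear 'M[R[i]]_d -> 'M[R[i]]_dB}) :
  channel Phi1 -> channel Phi2 ->
  let Delta := fun X : 'M[R[i]]_d => Phi1 X - Phi2 X in
  let r := \rank (Mop Delta) in
  me_norm Delta <= (r%:R / d%:R) * diamond_norm Delta.
Proof.
move=> [CP1 TP1] [CP2 TP2]; cbv zeta.
set Delta := (fun X : 'M[C]_d => Phi1 X - Phi2 X).
set r := \rank (Mop Delta).
set J := choi Delta.
have HJ : J^t* = J.
  by rewrite /J choi_sub adjB !psd_herm //; apply: choi_psd.
have [HP HP2] := mxabs_spec J.
set P := mxabs J in HP HP2.
set M := ptraceB P.
have HM : psdmx M.
  move=> u; rewrite -/(qf M u) /M ptrace_qf.
  by apply: sumr_ge0 => b _; apply: HP.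
have rE : r = \rank M by [].
have [Q [HQ HQQ trQ MQ]] := support_proj HM.
rewrite -rE in trQ.
have Jsw := sandwich HJ HQ MQ.
have Hext : ext_id Delta (rhoQ Q) = J.
  rewrite ext_id_sub; apply: tens_eq => b k b' l.
  rewrite mxEB !ext_rho Jsw -sumrB; apply: eq_bigr => i _.
  rewrite -sumrB; apply: eq_bigr => j _.
  by rewrite /J choi_sub mxEB mulrBr.
rewrite /diamond_norm; set S := (X in sup X).
have Hub : forall x, S x -> x <= 2.
  move=> x [n [rho [[Hr1 Hr2] ->]]].
  rewrite ext_id_sub; apply: trnorm_diff_le.
  - exact: CP1.
  - exact: CP2.
  - by rewrite tr_ext.
  - by rewrite tr_ext.
have Ed : forall k : nat, ((k%:R : C)^-1) = ((((k%:R : R)^-1)%:C)%C).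
  by move=> k; rewrite fmorphV rmorph_nat.
have meE : me_norm Delta = (d%:R)^-1 * trnorm J.
  by rewrite /me_norm -/J Ed trnorm_scale // invr_ge0 ler0n.
rewrite meE.
have [r0|rpos] := eqVneq r 0%N.
  have Q0 : Q = 0.
    apply: psd_tr0; last by rewrite trQ r0.
    by rewrite -HQQ -{1}HQ; apply: psd_adjmul.
  have J0 : J = 0.
    apply: tens_eq => b k b' l; rewrite Jsw Q0 [RHS]mxE.
    by apply: big1 => i _; apply: big1 => j _; rewrite !mxE !mul0r.
  by rewrite J0 trnorm0 r0 !mul0r mulr0.
set c : R := (r%:R)^-1.
have c0 : 0 <= c by rewrite invr_ge0 ler0n.
have rR0 : (r%:R : R) != 0 by rewrite pnatr_eq0.
set rho := (c%:C)%C *: rhoQ Q.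
have Hrho : statemx rho.
  split; first by apply: psd_scale; [rewrite ler0c | apply: rhoQ_psd].
  by rewrite mxtraceZ tr_rhoQ // trQ /c -Ed mulVf // pnatr_eq0.

have Hx : S (c * trnorm J).
  exists d, rho; split; first exact: Hrho.
  rewrite /rho /Delta ext_id_sub !ext_idZ -scalerBr -ext_id_sub -/Delta Hext.
  by rewrite trnorm_scale.
have HS : has_sup S by split; [exists (c * trnorm J) | exists 2 => y /Hub].
have Hle := sup_upper_bound HS Hx.
apply: le_trans (_ : _ <= r%:R / d%:R * (c * trnorm J)) _.
  by rewrite /c mulrCA mulrA mulKf.
by rewrite ler_wpM2l // divr_ge0 ?ler0n.
Qed.

End P15.

Unset Implicit Arguments.

Theorem corollary1 (R : realType) (d dB : nat)
  (Phi1 Phi2 : {linear 'M[R[i]]_d -> 'M[R[i]]_dB}) :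
  channel Phi1 -> channel Phi2 ->
  let Delta := fun X : 'M[R[i]]_d => Phi1 X - Phi2 X in
  let r := \rank (Mop Delta) in
  me_norm Delta <= (r%:R / d%:R) * diamond_norm Delta.
Proof. exact: main_lemma. Qed.
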